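(* Let $e_1,e_2,e_3$ be nonzero integers with $e_1+e_2+e_3=0$, $e_1,e_2$ odd and $2\,\|\,e_3$. Let $n$ be an odd positive square-free integer and $\Lambda=(d_1,d_2,d_3)$ with $d_1,d_2,d_3$ square-free divisors of $2e_1e_2e_3n$ and $d_1d_2d_3$ a square. If $D^{(n)}_\Lambda(\mathbb{Q}_2)\ne\emptyset$, then $d_3$ is odd.
   Context: $D^{(n)}_\Lambda\subset\mathbb{P}^3$ (coordinates $(t,u_1,u_2,u_3)$) is defined by $e_1nt^2+d_2u_2^2-d_3u_3^2=0$, $e_2nt^2+d_3u_3^2-d_1u_1^2=0$, $e_3nt^2+d_1u_1^2-d_2u_2^2=0$. $2\,\|\,m$ means $2\mid m$, $4\nmid m$. *)

(* Defs.v *)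
From mathcomp Require Import all_boot all_order all_algebra.
Set Implicit Arguments. Unset Strict Implicit. Unset Printing Implicit Defensive.
Import Order.TTheory GRing.Theory Num.Theory.
Local Open Scope ring_scope.

Definition sqfree_nat (m : nat) : Prop :=
  (0 < m)%N /\ forall p : nat, prime p -> ~~ (p * p %| m)%N.

Definition sqfree_int (d : int) : Prop := sqfree_nat `|d|%N.

(* 2-adic integers, as the inverse limit of Z/2^k Z: a sequence of integers
   a_k (a_k representing the residue mod 2^k) with a_{k+1} = a_k mod 2^k. *)
Definition is_Z2 (a : nat -> int) : Prop :=
  forall k : nat, (a k.+1 = a k %[mod (2 ^ k)%N%:Z])%Z.

Definition Z2_nonzero (a : nat -> int) : Prop :=
  exists k : nat, ~ (a k = 0 %[mod (2 ^ k)%N%:Z])%Z.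

(* Every point of
   P^3(Q_2) has a representative in Z_2^4 (clear denominators), so a point is a
   nonzero vector in Z_2^4 satisfying the three homogeneous equations; ring
   operations in Z_2 are componentwise modulo 2^k. *)
Definition D_has_Q2_point (e1 e2 e3 d1 d2 d3 n : int) : Prop :=
  exists t u1 u2 u3 : nat -> int,
    [/\ is_Z2 t, is_Z2 u1, is_Z2 u2 & is_Z2 u3] /\
    (Z2_nonzero t \/ Z2_nonzero u1 \/ Z2_nonzero u2 \/ Z2_nonzero u3) /\
    forall k : nat,
      [/\ (e1 * n * t k ^+ 2 + d2 * u2 k ^+ 2 - d3 * u3 k ^+ 2 = 0 %[mod (2 ^ k)%N%:Z])%Z,
          (e2 * n * t k ^+ 2 + d3 * u3 k ^+ 2 - d1 * u1 k ^+ 2 = 0 %[mod (2 ^ k)%N%:Z])%Z &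
          (e3 * n * t k ^+ 2 + d1 * u1 k ^+ 2 - d2 * u2 k ^+ 2 = 0 %[mod (2 ^ k)%N%:Z])%Z].

(* Main.v *)
Require Import Defs.
From mathcomp Require Import all_boot all_order all_algebra zify ring lra.
Import Order.TTheory GRing.Theory Num.Theory.
Local Open Scope ring_scope.

Lemma pz2 k : ((2 ^ k)%N%:Z) = (2 : int) ^+ k.
Proof. elim: k => [//|k IH]; by rewrite expnS exprS PoszM IH. Qed.

Lemma odd_wit [c : int] : ~~ (2 %| c)%Z -> exists p, c = 2 * p + 1.
Proof. by move=> hc; exists (c %/ 2)%Z; lia. Qed.
Lemma even_wit [c : int] : (2 %| c)%Z -> exists p, c = 2 * p.
Proof. by move=> hc; exists (c %/ 2)%Z; lia. Qed.

Lemma L1 [c x : int] : ~~ (2 %| c)%Z -> (2 %| c * x ^+ 2)%Z -> (2 %| x)%Z.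
Proof.
move=> hc h; apply/negPn/negP => hx.
have [p Hp] := odd_wit hc. have [q Hq] := odd_wit hx.
move: h; rewrite Hq Hp.
have -> : (2 * p + 1) * (2 * q + 1) ^+ 2 = 2 * (4 * p * q * q + 4 * p * q + p + 2 * q * q + 2 * q) + 1 by ring.
lia.
Qed.

Lemma L2 (c x : int) : (2 %| x)%Z -> (4 %| c * x ^+ 2)%Z.
Proof.
move=> /even_wit [q ->].
have -> : c * (2 * q) ^+ 2 = 4 * (c * q * q) by ring.
lia.
Qed.

Lemma L2' (c x : int) : (2 %| c)%Z -> (2 %| c * x ^+ 2)%Z.
Proof. move=> /even_wit [q ->]. have -> : 2 * q * x ^+ 2 = 2 * (q * x ^+ 2) by ring. lia. Qed.

Lemma L3 [d x : int] : (2 %| d)%Z -> ~~ (4 %| d)%Z -> (4 %| d * x ^+ 2)%Z -> (2 %| x)%Z.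
Proof.
move=> /even_wit [a Ha] h4 h; have ha : ~~ (2 %| a)%Z by move: h4; rewrite Ha; lia.
apply: (L1 ha); move: h; rewrite Ha.
have -> : 2 * a * x ^+ 2 = 2 * (a * x ^+ 2) by ring.
lia.
Qed.

Lemma Lodd [a b : int] : ~~ (2 %| a)%Z -> ~~ (2 %| b)%Z -> ~~ (2 %| a * b)%Z.
Proof.
move=> /odd_wit [p ->] /odd_wit [q ->].
have -> : (2 * p + 1) * (2 * q + 1) = 2 * (2 * p * q + p + q) + 1 by ring.
lia.
Qed.

Lemma Lsq_odd [s : int] : ~~ (2 %| s)%Z -> ~~ (2 %| s ^+ 2)%Z.
Proof. by move=> h; rewrite expr2; apply: Lodd. Qed.
Lemma Lsq_even [s : int] : (2 %| s)%Z -> (4 %| s ^+ 2)%Z.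
Proof. by move=> h; rewrite -[s ^+ 2]mul1r; apply: L2. Qed.

Lemma sq_parity [d1 d2 d3 s : int] :
  ~~ (4 %| d1)%Z -> ~~ (4 %| d2)%Z -> ~~ (4 %| d3)%Z -> (2 %| d3)%Z ->
  d1 * d2 * d3 = s ^+ 2 ->
  ((2 %| d1)%Z && ~~ (2 %| d2)%Z) || (~~ (2 %| d1)%Z && (2 %| d2)%Z).
Proof.
move=> h1 h2 h3 /even_wit [a3 Ha3] hs.
have o3 : ~~ (2 %| a3)%Z by move: h3; rewrite Ha3; lia.
case E1: (2 %| d1)%Z; case E2: (2 %| d2)%Z => //=.
- have [a1 Ha1] := even_wit E1; have [a2 Ha2] := even_wit E2.
  have o1 : ~~ (2 %| a1)%Z by move: h1; rewrite Ha1; lia.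
  have o2 : ~~ (2 %| a2)%Z by move: h2; rewrite Ha2; lia.
  have om := Lodd (Lodd o1 o2) o3.
  move: hs; rewrite Ha1 Ha2 Ha3.
  have -> : 2 * a1 * (2 * a2) * (2 * a3) = 8 * (a1 * a2 * a3) by ring.
  move: om; set m := a1 * a2 * a3 => om hs.
  case Es: (2 %| s)%Z; last by move: (Lsq_odd (negbT Es)); rewrite -hs; lia.
  have [s1 Hs1] := even_wit Es.
  move: hs; rewrite Hs1.
  have -> : (2 * s1) ^+ 2 = 4 * s1 ^+ 2 by ring.
  move=> hs.
  case Es1: (2 %| s1)%Z; last by move: (Lsq_odd (negbT Es1)); lia.
  have := Lsq_even Es1; lia.
- have om := Lodd (Lodd (negbT E1) (negbT E2)) o3.
  move: hs; rewrite Ha3.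
  have -> : d1 * d2 * (2 * a3) = 2 * (d1 * d2 * a3) by ring.
  move: om; set m := d1 * d2 * a3 => om hs.
  case Es: (2 %| s)%Z.
  + have := Lsq_even Es; lia.
  + have := Lsq_odd (negbT Es); lia.
Qed.

Definition Eqs4 (M A1 A2 A3 d1 d2 d3 T U1 U2 U3 : int) :=
  [/\ (M %| A1 * T ^+ 2 + d2 * U2 ^+ 2 - d3 * U3 ^+ 2)%Z,
      (M %| A2 * T ^+ 2 + d3 * U3 ^+ 2 - d1 * U1 ^+ 2)%Z &
      (M %| A3 * T ^+ 2 + d1 * U1 ^+ 2 - d2 * U2 ^+ 2)%Z].

Definition AllDiv (M T U1 U2 U3 : int) :=
  [/\ (M %| T)%Z, (M %| U1)%Z, (M %| U2)%Z & (M %| U3)%Z].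

Lemma dvd42 [x : int] : (4 %| x)%Z -> (2 %| x)%Z. Proof. lia. Qed.

Lemma baseA (A1 A2 A3 d1 d2 d3 T U1 U2 U3 : int) :
  ~~ (2 %| A1)%Z -> (2 %| A3)%Z ->
  (2 %| d1)%Z -> ~~ (4 %| d1)%Z -> ~~ (2 %| d2)%Z -> (2 %| d3)%Z -> ~~ (4 %| d3)%Z ->
  Eqs4 4 A1 A2 A3 d1 d2 d3 T U1 U2 U3 -> AllDiv 2 T U1 U2 U3.
Proof.
move=> a1 a3 e1 f1 o2 e3 f3 [h1 h2 h3].
have k1 := L2' _ T a3; have k2 := L2' _ U1 e1; have k3 := L2' _ U3 e3.
have hU2 : (2 %| U2)%Z.
  apply: (L1 o2); move: (dvd42 h3) k1 k2.
  move: (A3 * T ^+ 2) (d1 * U1 ^+ 2) (d2 * U2 ^+ 2) => x y z; lia.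
have m2 := L2 d2 _ hU2.
have hT : (2 %| T)%Z.
  apply: (L1 a1); move: (dvd42 h1) k3 (dvd42 m2).
  move: (A1 * T ^+ 2) (d3 * U3 ^+ 2) (d2 * U2 ^+ 2) => x y z; lia.
have m1 := L2 A1 _ hT; have m3 := L2 A3 _ hT.
have hU3 : (2 %| U3)%Z.
  apply: (L3 e3 f3); move: h1 m1 m2.
  move: (A1 * T ^+ 2) (d3 * U3 ^+ 2) (d2 * U2 ^+ 2) => x y z; lia.
have hU1 : (2 %| U1)%Z.
  apply: (L3 e1 f1); move: h3 m3 m2.
  move: (A3 * T ^+ 2) (d1 * U1 ^+ 2) (d2 * U2 ^+ 2) => x y z; lia.
by split.
Qed.

Lemma baseB (A1 A2 A3 d1 d2 d3 T U1 U2 U3 : int) :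
  ~~ (2 %| A2)%Z -> (2 %| A3)%Z ->
  ~~ (2 %| d1)%Z -> (2 %| d2)%Z -> ~~ (4 %| d2)%Z -> (2 %| d3)%Z -> ~~ (4 %| d3)%Z ->
  Eqs4 4 A1 A2 A3 d1 d2 d3 T U1 U2 U3 -> AllDiv 2 T U1 U2 U3.
Proof.
move=> a2 a3 o1 e2 f2 e3 f3 [h1 h2 h3].
have k1 := L2' _ T a3; have k2 := L2' _ U2 e2; have k3 := L2' _ U3 e3.
have hU1 : (2 %| U1)%Z.
  apply: (L1 o1); move: (dvd42 h3) k1 k2.
  move: (A3 * T ^+ 2) (d1 * U1 ^+ 2) (d2 * U2 ^+ 2) => x y z; lia.
have m1 := L2 d1 _ hU1.
have hT : (2 %| T)%Z.
  apply: (L1 a2); move: (dvd42 h2) k3 (dvd42 m1).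
  move: (A2 * T ^+ 2) (d3 * U3 ^+ 2) (d1 * U1 ^+ 2) => x y z; lia.
have n2 := L2 A2 _ hT; have n3 := L2 A3 _ hT.
have hU2 : (2 %| U2)%Z.
  apply: (L3 e2 f2); move: h3 n3 m1.
  move: (A3 * T ^+ 2) (d1 * U1 ^+ 2) (d2 * U2 ^+ 2) => x y z; lia.
have hU3 : (2 %| U3)%Z.
  apply: (L3 e3 f3); move: h2 n2 m1.
  move: (A2 * T ^+ 2) (d3 * U3 ^+ 2) (d1 * U1 ^+ 2) => x y z; lia.
by split.
Qed.

Lemma descent (A1 A2 A3 d1 d2 d3 : int)
  (base : forall T U1 U2 U3, Eqs4 4 A1 A2 A3 d1 d2 d3 T U1 U2 U3 -> AllDiv 2 T U1 U2 U3) :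
  forall j T U1 U2 U3, Eqs4 (4 ^+ j.+1) A1 A2 A3 d1 d2 d3 T U1 U2 U3 ->
     AllDiv (2 ^+ j.+1) T U1 U2 U3.
Proof.
elim=> [|j IH] T U1 U2 U3 H; first exact: base.
have H4 : Eqs4 4 A1 A2 A3 d1 d2 d3 T U1 U2 U3.
  have d : (4 %| 4 ^+ j.+2)%Z by rewrite exprS; apply: dvdz_mulr.
  by case: H => h1 h2 h3; split; apply: dvdz_trans d _.
case: (base _ _ _ _ H4) H => /even_wit [t ->] /even_wit [v1 ->] /even_wit [v2 ->] /even_wit [v3 ->].
move=> H.
have : Eqs4 (4 ^+ j.+1) A1 A2 A3 d1 d2 d3 t v1 v2 v3.
  case: H => h1 h2 h3; split.
  - move: h1; rewrite exprS.
    have -> : A1 * (2 * t) ^+ 2 + d2 * (2 * v2) ^+ 2 - d3 * (2 * v3) ^+ 2 = 4 * (A1 * t ^+ 2 + d2 * v2 ^+ 2 - d3 * v3 ^+ 2) by ring.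
    by rewrite dvdz_mul2l.
  - move: h2; rewrite exprS.
    have -> : A2 * (2 * t) ^+ 2 + d3 * (2 * v3) ^+ 2 - d1 * (2 * v1) ^+ 2 = 4 * (A2 * t ^+ 2 + d3 * v3 ^+ 2 - d1 * v1 ^+ 2) by ring.
    by rewrite dvdz_mul2l.
  - move: h3; rewrite exprS.
    have -> : A3 * (2 * t) ^+ 2 + d1 * (2 * v1) ^+ 2 - d2 * (2 * v2) ^+ 2 = 4 * (A3 * t ^+ 2 + d1 * v1 ^+ 2 - d2 * v2 ^+ 2) by ring.
    by rewrite dvdz_mul2l.
move=> /IH [g1 g2 g3 g4].
by split; rewrite [2 ^+ _]exprS dvdz_mul2l.
Qed.

Lemma cons_Z2 (a : nat -> int) : is_Z2 a -> forall k m, (k <= m)%N -> (2 ^+ k %| a m - a k)%Z.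
Proof.
move=> h k; elim=> [|m IH] le.
  by move: le; rewrite leqn0 => /eqP ->; rewrite subrr dvdz0.
case: (ltngtP k m.+1) le => // [lt|->] _; last by rewrite subrr dvdz0.
have /eqP := h m; rewrite eqz_mod_dvd pz2 => hm.
have -> : a m.+1 - a k = (a m.+1 - a m) + (a m - a k) by ring.
apply: rpredD; last exact: IH.
by apply: dvdz_trans (dvdz_exp2l 2 (ltnSE lt)) hm.
Qed.

Lemma modP (M x : int) : (x = 0 %[mod M])%Z -> (M %| x)%Z.
Proof. by move=> h; apply/dvdz_mod0P; rewrite h mod0z. Qed.

Lemma nz_contra [a : nat -> int] : Z2_nonzero a -> (forall k, (2 ^+ k %| a k)%Z) -> False.
Proof.
move=> [k hk] H; apply: hk.
by move/dvdz_mod0P: (H k); rewrite pz2 mod0z.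
Qed.

Lemma sq4 (x : int) : ~~ (4 %| x)%Z -> ~~ (2 * 2 %| `|x|)%N.
Proof. by rewrite dvdzE. Qed.

Theorem lemma3p1 (e1 e2 e3 : int) (n : nat) (d1 d2 d3 : int) :
  e1 != 0 -> e2 != 0 -> e3 != 0 ->
  e1 + e2 + e3 = 0 ->
  ~~ (2 %| e1)%Z -> ~~ (2 %| e2)%Z ->
  (2 %| e3)%Z -> ~~ (4 %| e3)%Z ->
  odd n -> (0 < n)%N -> sqfree_nat n ->
  sqfree_int d1 -> sqfree_int d2 -> sqfree_int d3 ->
  (d1 %| 2 * e1 * e2 * e3 * n%:Z)%Z ->
  (d2 %| 2 * e1 * e2 * e3 * n%:Z)%Z ->
  (d3 %| 2 * e1 * e2 * e3 * n%:Z)%Z ->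
  (exists s : int, d1 * d2 * d3 = s ^+ 2) ->
  D_has_Q2_point e1 e2 e3 d1 d2 d3 n%:Z ->
  ~~ (2 %| d3)%Z.
Proof.
move=> _ _ _ _ he1 he2 he3 _ hn _ _ s1 s2 s3 _ _ _ [s hs]
  [t [u1 [u2 [u3 [[zt z1 z2 z3] [nz heq]]]]]].
apply/negP => e3d.
have nf : forall d, sqfree_int d -> ~~ (4 %| d)%Z.
  by move=> d [_ /(_ 2 isT)]; rewrite dvdzE.
have f1 := nf _ s1; have f2 := nf _ s2; have f3 := nf _ s3.
have on : ~~ (2 %| n%:Z)%Z by rewrite dvdzE /= dvdn2 hn.
have a1 := Lodd he1 on; have a2 := Lodd he2 on.
have a3 : (2 %| e3 * n%:Z)%Z by apply: dvdz_mulr.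
have base : forall T U1 U2 U3,
    Eqs4 4 (e1 * n%:Z) (e2 * n%:Z) (e3 * n%:Z) d1 d2 d3 T U1 U2 U3 -> AllDiv 2 T U1 U2 U3.
  case/orP: (sq_parity f1 f2 f3 e3d hs) => /andP [p1 p2] T U1 U2 U3.
  - exact: baseA.
  - exact: baseB.
have all : forall k, AllDiv (2 ^+ k) (t k) (u1 k) (u2 k) (u3 k).
  case=> [|j]; first by split; rewrite expr0 dvd1z.
  set k := j.+1.
  have E : Eqs4 (4 ^+ k) (e1 * n%:Z) (e2 * n%:Z) (e3 * n%:Z) d1 d2 d3
            (t (2 * k)%N) (u1 (2 * k)%N) (u2 (2 * k)%N) (u3 (2 * k)%N).
    have -> : (4 : int) ^+ k = ((2 ^ (2 * k))%N)%:Z by rewrite pz2 exprM.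
    by case: (heq (2 * k)%N) => h1 h2 h3; split; apply: modP.
  have le : (k <= 2 * k)%N by rewrite leq_pmull.
  case: (@descent _ _ _ _ _ _ base j _ _ _ _ E) => g1 g2 g3 g4.
  split.
  - have c := @cons_Z2 _ zt _ _ le.
    have -> : t k = t (2 * k)%N - (t (2 * k)%N - t k) by ring.
    by apply: rpredB.
  - have c := @cons_Z2 _ z1 _ _ le.
    have -> : u1 k = u1 (2 * k)%N - (u1 (2 * k)%N - u1 k) by ring.
    by apply: rpredB.
  - have c := @cons_Z2 _ z2 _ _ le.
    have -> : u2 k = u2 (2 * k)%N - (u2 (2 * k)%N - u2 k) by ring.
    by apply: rpredB.
  - have c := @cons_Z2 _ z3 _ _ le.
    have -> : u3 k = u3 (2 * k)%N - (u3 (2 * k)%N - u3 k) by ring.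
    by apply: rpredB.
case: nz => [|[|[|]]] h; apply: (nz_contra h) => k; by case: (all k).
Qed.
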